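(* Let $\varphi:\Lambda\to\Gamma$ be a regular covering map of degree $n$ of finite simplicial graphs without isolated vertices, with $|V\Gamma|=m$. Order $V\Lambda$ so that each fiber forms a consecutive block, the blocks being $V_1,\dots,V_m$, and order $V\Gamma$ as $\varphi(V_1),\dots,\varphi(V_m)$. Let $F\in\mathrm{Aut}(A_\Lambda)$ be a lift of $f\in\mathrm{Aut}(A_\Gamma)$. Then the $nm\times nm$ matrix $\tilde M$ of the action of $F$ on $H_1(A_\Lambda)$ is a blow up of the $m\times m$ matrix $M$ of the action of $f$ on $H_1(A_\Gamma)$.
   Context: $A_\Gamma$ is the right-angled Artin group with generators $V\Gamma$ and relations $[a,b]=1$ for edges; $H_1(A_\Gamma)\cong\mathbb Z^{V\Gamma}$ with basis the vertices, and the matrix of an automorphism has as the column of a vertex $v$ the coordinates of the image of $v$. A covering map $\varphi:\Lambda\to\Gamma$ is a surjective simplicial map mapping the neighbours of each vertex $u$ bijectively onto the neighbours of $\varphi(u)$; regular means the group of graph automorphisms $\mu$ of $\Lambda$ with $\varphi\mu=\varphi$ acts transitively on each fiber; the degree is the common fiber size. $\phi:A_\Lambda\to A_\Gamma$ is induced by $\varphi$, and $F$ is a lift of $f$ if $f\circ\phi=\phi\circ F$. An $nm\times nm$ matrix $\tilde M$ with $n\times n$ blocks is a blow up of an $m\times m$ matrix $M$ if, for all $i,j$, every column of the $(i,j)$ block of $\tilde M$ has all entries $0$ except one entry equal to $M(i,j)$. *)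

(* Defs.v *)
From Stdlib Require Import Relations.
From mathcomp Require Import all_boot all_order all_algebra all_fingroup.
Set Implicit Arguments. Unset Strict Implicit. Unset Printing Implicit Defensive.
Import Order.TTheory GRing.Theory Num.Theory.

(* A letter (v, true) is the generator v, (v, false) is its inverse.   *)
Section RAAG.
Variable V : finType.

Definition inv_word (w : seq (V * bool)) : seq (V * bool) :=
  rev (map (fun x => (x.1, ~~ x.2)) w).

Inductive raag_step (adj : rel V) : seq (V * bool) -> seq (V * bool) -> Prop :=
| rs_cancel (w1 w2 : seq (V * bool)) (a : V) (b : bool) :
    raag_step adj (w1 ++ (a, b) :: (a, ~~ b) :: w2) (w1 ++ w2)
| rs_comm (w1 w2 : seq (V * bool)) (x y : V * bool) :
    adj x.1 y.1 -> raag_step adj (w1 ++ x :: y :: w2) (w1 ++ y :: x :: w2).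

Definition raag_eq (adj : rel V) : relation (seq (V * bool)) :=
  clos_refl_sym_trans _ (raag_step adj).

(* exponent sum of v in w: the v-coordinate of the image of w in H_1 = Z^V *)
Definition expsum (w : seq (V * bool)) (v : V) : int :=
  \sum_(x <- w | x.1 == v) (if x.2 then 1%R else (-1)%R).
End RAAG.

Definition subst (V W : finType) (g : V -> seq (W * bool)) (w : seq (V * bool))
  : seq (W * bool) :=
  flatten (map (fun x => if x.2 then g x.1 else inv_word (g x.1)) w).

Definition raag_hom (V W : finType) (adjV : rel V) (adjW : rel W)
  (g : V -> seq (W * bool)) : Prop :=
  forall w1 w2, raag_eq adjV w1 w2 -> raag_eq adjW (subst g w1) (subst g w2).

Definition raag_aut (V : finType) (adj : rel V) (g : V -> seq (V * bool)) : Prop :=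
  raag_hom adj adj g /\
  exists h : V -> seq (V * bool),
    [/\ raag_hom adj adj h,
        forall v, raag_eq adj (subst h (g v)) [:: (v, true)] &
        forall v, raag_eq adj (subst g (h v)) [:: (v, true)]].

(* matrix of the action on H_1 (column j = coordinates of the image of j) *)
Definition raag_mat (N : nat) (g : 'I_N -> seq ('I_N * bool)) : 'M[int]_N :=
  \matrix_(i, j) expsum (g j) i.

Definition simple_graph (V : finType) (adj : rel V) : Prop :=
  symmetric adj /\ irreflexive adj.

Definition no_isolated (V : finType) (adj : rel V) : Prop :=
  forall v, exists w, adj v w.

Definition covering_map (VL VG : finType) (adjL : rel VL) (adjG : rel VG)
  (phi : VL -> VG) : Prop :=
  [/\ forall w, exists u, phi u = w,
      forall u v, adjL u v -> adjG (phi u) (phi v),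
      forall u, {in [pred v | adjL u v] &, injective phi} &
      forall u w, adjG (phi u) w -> exists2 v, adjL u v & phi v = w].

Definition deck (VL VG : finType) (adjL : rel VL) (phi : VL -> VG)
  (mu : {perm VL}) : Prop :=
  (forall x y, adjL (mu x) (mu y) = adjL x y) /\ (forall x, phi (mu x) = phi x).

Definition regular_covering (VL VG : finType) (adjL : rel VL) (adjG : rel VG)
  (phi : VL -> VG) : Prop :=
  covering_map adjL adjG phi /\
  forall u u', phi u = phi u' -> exists2 mu, deck adjL phi mu & mu u = u'.

Definition is_lift (VL VG : finType) (adjG : rel VG) (phi : VL -> VG)
  (F : VL -> seq (VL * bool)) (f : VG -> seq (VG * bool)) : Prop :=
  forall u, raag_eq adjG (f (phi u)) (subst (fun x => [:: (phi x, true)]) (F u)).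

(* Mt (nm x nm, blocks of size n) is a blow up of M (m x m);
   the (i,j) block consists of rows r with r %/ n = i and columns c with c %/ n = j *)
Definition blow_up (n m : nat) (Mt : 'M[int]_(n * m)) (M : 'M[int]_m) : Prop :=
  forall (i j : 'I_m) (c : 'I_(n * m)), c %/ n = j ->
    exists2 r : 'I_(n * m), r %/ n = i &
      Mt r c = M i j /\ (forall r' : 'I_(n * m), r' %/ n = i -> r' != r -> Mt r' c = 0%R).

(* Main.v *)
Require Import Defs.
From mathcomp Require Import all_boot all_order all_algebra all_fingroup.
From Stdlib Require Import Relations.
From mathcomp Require Import ring zify.
Set Implicit Arguments. Unset Strict Implicit. Unset Printing Implicit Defensive.
Import Order.TTheory GRing.Theory Num.Theory.
Local Open Scope ring_scope.

Section Inv.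
Variable V : finType.
Implicit Types (w s : seq (V * bool)) (p q v : V).

Definition sg (x : V * bool) : int := if x.2 then 1 else -1.

Lemma expsum_nil v : expsum [::] v = 0.
Proof. by rewrite /expsum big_nil. Qed.

Lemma expsum_cons x w v :
  expsum (x :: w) v = (if x.1 == v then sg x else 0) + expsum w v.
Proof. by rewrite /expsum big_cons; case: ifP => _ //; rewrite add0r. Qed.

Lemma expsum_cat w1 w2 v : expsum (w1 ++ w2) v = expsum w1 v + expsum w2 v.
Proof. by rewrite /expsum big_cat. Qed.

Fixpoint cw p q w : int :=
  match w with
  | [::] => 0
  | x :: w' => cw p q w' + sg x * ((if x.1 == p then expsum w' q else 0)
                                  - (if x.1 == q then expsum w' p else 0))
  end.

Lemma cw_cat p q w1 w2 : cw p q (w1 ++ w2) = cw p q w1 + cw p q w2 +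
  (expsum w1 p * expsum w2 q - expsum w1 q * expsum w2 p).
Proof.
elim: w1 => [|x w1 IH] /=; first by rewrite !expsum_nil; ring.
rewrite IH !expsum_cat !expsum_cons.
case: (x.1 == p); case: (x.1 == q) => /=; ring.
Qed.

Lemma expsum_step adj w1 w2 v : raag_step adj w1 w2 -> expsum w1 v = expsum w2 v.
Proof.
case=> [u1 u2 a b | u1 u2 x y _]; rewrite !expsum_cat !expsum_cons /sg /=.
  by case: b; case: (a == v) => /=; ring.
by congr (_ + _); rewrite addrCA.
Qed.

Lemma cw_step (adj : rel V) p q w1 w2 : ~~ adj p q -> ~~ adj q p ->
  raag_step adj w1 w2 -> cw p q w1 = cw p q w2.
Proof.
move=> npq nqp; case=> [u1 u2 a b | u1 u2 x y axy]; rewrite !cw_cat.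
  have -> : (a, b) :: (a, ~~ b) :: u2 = [:: (a, b); (a, ~~ b)] ++ u2 by [].
  rewrite !cw_cat !expsum_cat /= !expsum_cons !expsum_nil /sg /=.
  by case: b; case: (a == p); case: (a == q) => /=; ring.
have -> : x :: y :: u2 = [:: x; y] ++ u2 by [].
have -> : y :: x :: u2 = [:: y; x] ++ u2 by [].
rewrite !cw_cat !expsum_cat /= !expsum_cons !expsum_nil.
have H1 : ~~ ((x.1 == p) && (y.1 == q)).
  by apply/negP => /andP [/eqP ex /eqP ey]; move: npq; rewrite -ex -ey axy.
have H2 : ~~ ((x.1 == q) && (y.1 == p)).
  by apply/negP => /andP [/eqP ex /eqP ey]; move: nqp; rewrite -ex -ey axy.
move: H1 H2; case: (x.1 == p); case: (y.1 == q); case: (x.1 == q); case: (y.1 == p);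
  rewrite //= => _ _; ring.
Qed.

Lemma expsum_eq adj w1 w2 v : raag_eq adj w1 w2 -> expsum w1 v = expsum w2 v.
Proof.
elim=> [a b /expsum_step //| // | a b _ -> // | a b c _ -> _ -> //].
Qed.

Lemma cw_eq (adj : rel V) p q w1 w2 : ~~ adj p q -> ~~ adj q p ->
  raag_eq adj w1 w2 -> cw p q w1 = cw p q w2.
Proof.
move=> n1 n2.
elim=> [a b /(cw_step n1 n2) //| // | a b _ -> // | a b c _ -> _ -> //].
Qed.

Lemma expsum_inv s v : expsum (inv_word s) v = - expsum s v.
Proof.
elim: s => [|x s IH]; first by rewrite /inv_word /= expsum_nil oppr0.
have -> : inv_word (x :: s) = inv_word s ++ [:: (x.1, ~~ x.2)].
  by rewrite /inv_word map_cons rev_cons -cats1.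
rewrite expsum_cat IH !expsum_cons expsum_nil /sg /=.
by case: x.2; case: (x.1 == v) => /=; ring.
Qed.

End Inv.

Lemma expsum_subst (V W : finType) (g : V -> seq (W * bool)) w p :
  expsum (subst g w) p = \sum_q expsum w q * expsum (g q) p.
Proof.
elim: w => [|x w IH].
  by rewrite /subst /= expsum_nil big1 // => q _; rewrite expsum_nil mul0r.
have -> : subst g (x :: w) =
  (if x.2 then g x.1 else inv_word (g x.1)) ++ subst g w by [].
rewrite expsum_cat IH; symmetry.
under eq_bigr => q _ do rewrite expsum_cons mulrDl.
rewrite big_split /=; congr (_ + _).
rewrite (bigD1 x.1) //= eqxx big1 ?addr0.
  by case: x => a [] /=; rewrite /sg /= ?expsum_inv; ring.
by move=> q; rewrite eq_sym => /negbTE ->; rewrite mul0r.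
Qed.

Local Close Scope ring_scope.

Theorem lemma8p3 (n m : nat)
  (adjG : rel 'I_m) (adjL : rel 'I_(n * m)) (phi : 'I_(n * m) -> 'I_m)
  (f : 'I_m -> seq ('I_m * bool)) (F : 'I_(n * m) -> seq ('I_(n * m) * bool)) :
  simple_graph adjG -> simple_graph adjL ->
  no_isolated adjG -> no_isolated adjL ->
  regular_covering adjL adjG phi ->
  (* ordering: fibres are the consecutive blocks V_1..V_m of size n (so the
     degree is n), and V_Gamma is ordered as phi(V_1),...,phi(V_m) *)
  (forall k : 'I_(n * m), val (phi k) = k %/ n) ->
  raag_aut adjG f -> raag_aut adjL F ->
  is_lift adjG phi F f ->
  blow_up (raag_mat F) (raag_mat f).
Proof.
Local Open Scope ring_scope.
move=> [_ irrG] [symL irrL] _ noisoL [[_ simpl inj _] _] hphi _ [homF [h [_ hF _]]] lift.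
have Hinv : forall v p, \sum_q expsum (F v) q * expsum (h q) p = if v == p then 1 else 0.
  move=> v p; rewrite -expsum_subst (expsum_eq p (hF v)) expsum_cons expsum_nil addr0.
  by [].
have key : forall u v w, v != w -> phi v = phi w ->
    expsum (F u) v != 0 -> expsum (F u) w != 0 -> False.
  move=> u v w nvw pvw xv xw.
  have [y auy] := noisoL u.
  have nuy : u != y by apply/eqP => e; move: auy; rewrite e irrL.
  have com : raag_eq adjL (F u ++ F y) (F y ++ F u).
    have := homF [:: (u, true); (y, true)] [:: (y, true); (u, true)].
    rewrite /subst /= !cats0; apply.
    apply: rst_step; exact: (@rs_comm _ adjL [::] [::] (u, true) (y, true) auy).
  set x := expsum (F u); set z := expsum (F y).
  have rel : forall p q, p != q -> ~~ adjL p q -> x p * z q = x q * z p.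
    move=> p q npq apq.
    have aqp : ~~ adjL q p by rewrite symL.
    have := cw_eq apq aqp com; rewrite !cw_cat => e.
    have e2 : (x p * z q - x q * z p) *+ 2 = 0.
      rewrite /x /z; move: e; set A := cw _ _ (F u); set B := cw _ _ (F y).
      rewrite (addrC B A) => /addrI e.
      rewrite mulr2n.
      have -> : forall a b c d : int, (a * b - c * d) + (a * b - c * d) = (a * b - c * d) - (d * c - b * a).
        by move=> a b c d; ring.
      by rewrite e subrr.
    by move/eqP: e2; rewrite mulrn_eq0 /= subr_eq0 => /eqP.
  have nadj : forall a b, a != b -> phi a = phi b -> ~~ adjL a b.
    move=> a b nab pab; apply/negP => aab.
    by have := simpl _ _ aab; rewrite pab irrG.
  have all : forall q, x v * z q = x q * z v.
    move=> q; have [->|nqv] := eqVneq q v; first by [].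
    case avq: (adjL v q); last by apply: rel; rewrite 1?eq_sym ?avq.
    have nqw : q != w.
      by apply/eqP => e; move: avq; rewrite e (negbTE (nadj _ _ nvw pvw)).
    have nawq : ~~ adjL w q.
      apply/negP => awq; move/negP: nvw; apply; apply/eqP.
      by apply: (inj q); rewrite // inE symL.
    have nwq : w != q by rewrite eq_sym.
    have r1 := rel w q nwq nawq.
    have r2 := rel v w nvw (nadj _ _ nvw pvw).
    apply: (mulfI xw).
    by rewrite mulrA (mulrC (x w)) -mulrA r1 mulrA (mulrC (x v)) -mulrA r2; ring.
  have s1 := Hinv y y; have s0 := Hinv u y.
  rewrite eqxx in s1; rewrite (negbTE nuy) in s0.
  move/eqP: xv; apply.
  rewrite -/x.
  rewrite -[x v]mulr1 -s1 -/z mulr_sumr.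
  under eq_bigr => q _ do rewrite mulrA all mulrAC.
  by rewrite -mulr_suml -/x s0 mul0r.
move=> i j c hc.
have pc : phi c = j by apply: val_inj; rewrite /= hphi.
have Mij : raag_mat f i j = \sum_(q | phi q == i) raag_mat F q c.
  rewrite !mxE -pc (expsum_eq i (lift c)) expsum_subst [RHS]big_mkcond /=.
  apply: eq_bigr => q _; rewrite !mxE expsum_cons expsum_nil addr0 /sg /=.
  by case: (phi q == i); rewrite ?mulr1 ?mulr0.
have fib : forall r : 'I_(n * m), (r %/ n = i)%N <-> phi r = i.
  by move=> r; split => [e|<-]; [apply: val_inj; rewrite /= hphi | rewrite hphi].
case: (pickP (fun r => (phi r == i) && (expsum (F c) r != 0))) => [r /andP [/eqP pr nz]|none].
  exists r; first by apply/fib.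
  have oth : forall r', phi r' = i -> r' != r -> raag_mat F r' c = 0.
    move=> r' pr' nr'; rewrite mxE; apply/eqP; apply/negPn/negP => nz'.
    by apply: (key c r' r nr'); rewrite // pr pr'.
  split; last by move=> r' /fib pr'; apply: oth.
  rewrite Mij (bigD1 r) /=; last by rewrite pr.
  rewrite big1 ?addr0 // => q /andP [/eqP pq nq]; exact: oth.
have n0 : (0 < n)%N.
  have := ltn_ord c; move: (nat_of_ord c) => k; case: (n) => //.

have lt : (i * n < n * m)%N by rewrite mulnC ltn_pmul2l.
exists (Ordinal lt); first by rewrite /= mulnK.
have zero : forall r', phi r' = i -> raag_mat F r' c = 0.
  move=> r' pr'; rewrite mxE; move: (none r'); rewrite pr' eqxx /=.
  by move/negbT; rewrite negbK => /eqP.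
split; last by move=> r' /fib pr' _; apply: zero.
rewrite zero; last by apply/fib; rewrite /= mulnK.
by rewrite Mij big1 // => q /eqP; apply: zero.
Qed.
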